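(* Let $n\in\mathbb{N}$, $H\in\mathbb{R}^{n\times n}$, $W\succ 0$ in $\mathbb{R}^{n\times n}$, and $C=\mathrm{diag}(C_{11},\dots,C_{nn})$ diagonal with all $C_{ii}\ne 0$; assume $(H,C)$ observable and $(H,D)$ controllable where $W=DD^T$. Let $\Delta>0$ (the $\ell_2$-sensitivity $\Delta_{\ell_2}y$), let $\delta\in[10^{-5},10^{-1}]$, let $\epsilon>0$, and set $$\sigma=\frac{\Delta}{2\epsilon}\Big(K_\delta+\sqrt{K_\delta^2+2\epsilon}\Big),\qquad K_\delta:=\mathcal Q^{-1}(\delta),$$ and $V=\sigma^2 I_n$. Let $\Sigma$ be the unique positive semidefinite solution of $\Sigma = H\Sigma H^T - H\Sigma C^T(C\Sigma C^T+V)^{-1}C\Sigma H^T + W$ and $\overline\Sigma:=(C^TV^{-1}C+\Sigma^{-1})^{-1}$. Let $B_l,B_u$ satisfy $0<B_l<n\,\lambda_n(W)$ and $B_u>0$, and define $$\eta_2:=\left(\frac{B_l\,C_u^2}{\Delta^2\big(n-B_l\lambda_n(W)^{-1}\big)}\right)^{1/2},\qquad \eta_4:=\left(\frac{B_u\,C_l^2}{n\,\Delta^2}\right)^{1/2}.$$ If $$\frac18\left(\frac{1+\sqrt{36\eta_4+1}}{\eta_4}\right)^2\le\epsilon,$$ then $\mathrm{tr}\,\overline\Sigma\le B_u$; and if $\epsilon\le 1/\eta_2$, then $\mathrm{tr}\,\overline\Sigma\ge B_l$. In particular, if both inequalities on $\epsilon$ hold, then $B_l\le\mathrm{tr}\,\overline\Sigma\le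 B_u$.
   Context: $\mathcal Q(y)=\frac{1}{\sqrt{2\pi}}\int_y^\infty e^{-z^2/2}\,dz$ is the Gaussian tail function and $\mathcal Q^{-1}$ its inverse. The noise level $\sigma$ is the Gaussian-mechanism noise giving $(\epsilon,\delta)$-differential privacy of the state trajectory when $\Delta$ is the sensitivity $\Delta_{\ell_2}y=\sup\{\|Cx-Cx'\|_{\ell_2}:\|x-x'\|_{\ell_2}\le B\}$; for the claim, $\Delta$ may be any positive constant. $\mathrm{tr}\,\overline\Sigma$ is the steady-state mean squared a posteriori (estimation) error of the Kalman filter. $\lambda_n(W)$ is the smallest eigenvalue of $W$. $C_l:=C_{ll}$ with $l=\arg\min_i C_{ii}^2$ and $C_u:=C_{uu}$ with $u=\arg\max_i C_{ii}^2$. *)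

(* Defs.v *)
(* classical reals (Reals), hand-rolled finite-dimensional
   real matrices represented as functions nat -> nat -> R, only the entries
   with indices below the stated dimensions being meaningful. *)
From Stdlib Require Import Reals Lra List.
Open Scope R_scope.

Definition Mat := nat -> nat -> R.
Definition Vec := nat -> R.

Definition sumR (n : nat) (f : nat -> R) : R :=
  fold_right (fun i acc => f i + acc) 0 (seq 0 n).

Definition mmul (k : nat) (A B : Mat) : Mat :=
  fun i j => sumR k (fun l => A i l * B l j).
Definition mvec (k : nat) (A : Mat) (v : Vec) : Vec :=
  fun i => sumR k (fun l => A i l * v l).
Definition trm (A : Mat) : Mat := fun i j => A j i.
Definition madd (A B : Mat) : Mat := fun i j => A i j + B i j.
Definition msub (A B : Mat) : Mat := fun i j => A i j - B i j.
Definition mscale (a : R) (A : Mat) : Mat := fun i j => a * A i j.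
Definition idm : Mat := fun i j => if Nat.eqb i j then 1 else 0.
Definition trace (n : nat) (A : Mat) : R := sumR n (fun i => A i i).

Fixpoint mpow (n : nat) (H : Mat) (k : nat) : Mat :=
  match k with
  | O => idm
  | S k' => mmul n H (mpow n H k')
  end.

Definition meq (p q : nat) (A B : Mat) : Prop :=
  forall i j, (i < p)%nat -> (j < q)%nat -> A i j = B i j.

Definition is_inv (n : nat) (A Ainv : Mat) : Prop :=
  meq n n (mmul n A Ainv) idm /\ meq n n (mmul n Ainv A) idm.

Definition nonzero_vec (n : nat) (v : Vec) : Prop :=
  exists i, (i < n)%nat /\ v i <> 0.

Definition symmetric (n : nat) (A : Mat) : Prop := meq n n A (trm A).

Definition quad (n : nat) (A : Mat) (x : Vec) : R :=
  sumR n (fun i => x i * mvec n A x i).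

Definition psd (n : nat) (A : Mat) : Prop :=
  symmetric n A /\ forall x : Vec, 0 <= quad n A x.
Definition pd (n : nat) (A : Mat) : Prop :=
  symmetric n A /\ forall x : Vec, nonzero_vec n x -> 0 < quad n A x.

Definition is_eigenvalue (n : nat) (A : Mat) (mu : R) : Prop :=
  exists v : Vec, nonzero_vec n v /\ forall i, (i < n)%nat -> mvec n A v i = mu * v i.

Definition is_min_eigenvalue (n : nat) (A : Mat) (lam : R) : Prop :=
  is_eigenvalue n A lam /\ forall mu, is_eigenvalue n A mu -> lam <= mu.

Definition diagonal (n : nat) (C : Mat) : Prop :=
  forall i j, (i < n)%nat -> (j < n)%nat -> i <> j -> C i j = 0.

(* (H, C) observable (H n x n, C p x n): the observability matrix
   [C; CH; ...; CH^(n-1)] has trivial kernel, i.e. rank n. *)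
Definition observable (n p : nat) (H C : Mat) : Prop :=
  forall v : Vec,
    (forall k i, (k < n)%nat -> (i < p)%nat -> mvec n (mmul n C (mpow n H k)) v i = 0) ->
    forall i, (i < n)%nat -> v i = 0.

(* (H, D) controllable (H n x n, D n x m): the controllability matrix
   [D, HD, ..., H^(n-1) D] has full row rank n (trivial left kernel). *)
Definition controllable (n m : nat) (H D : Mat) : Prop :=
  forall w : Vec,
    (forall k j, (k < n)%nat -> (j < m)%nat ->
        sumR n (fun i => w i * mmul n (mpow n H k) D i j) = 0) ->
    forall i, (i < n)%nat -> w i = 0.

(* Gaussian density and tail function.  Qtail y q  means  Q(y) = q, i.e.
   lim_{b -> +oo} int_y^b phi = q  (improper Riemann integral). *)
Definition gauss_pdf (z : R) : R := / sqrt (2 * PI) * exp (- z ^ 2 / 2).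

Definition Qtail (y q : R) : Prop :=
  forall eps, 0 < eps -> exists B, forall b (pr : Riemann_integrable gauss_pdf y b),
      B <= b -> Rabs (RiemannInt pr - q) < eps.

Definition riccati_solution (n : nat) (H C V W Sigma : Mat) : Prop :=
  exists M : Mat,
    is_inv n (madd (mmul n (mmul n C Sigma) (trm C)) V) M /\
    meq n n Sigma
      (madd (msub (mmul n (mmul n H Sigma) (trm H))
                  (mmul n (mmul n (mmul n (mmul n (mmul n H Sigma) (trm C)) M) C) (mmul n Sigma (trm H))))
            W).

(* Main.v *)
Require Import Defs.
From Stdlib Require Import Reals Lra List Lia FunctionalExtensionality Classical.
From Coquelicot Require Import Coquelicot.
Open Scope R_scope.

Lemma fold_sum_init (f : nat -> R) l x :
  fold_right (fun i acc => f i + acc) x l = fold_right (fun i acc => f i + acc) 0 l + x.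
Proof. induction l as [|a l IH]; simpl. lra. rewrite IH. lra. Qed.

Lemma sumR_S n f : sumR (S n) f = sumR n f + f n.
Proof.
  unfold sumR. rewrite seq_S, fold_right_app. simpl.
  rewrite fold_sum_init. lra.
Qed.
Lemma sumR_0 f : sumR 0 f = 0. Proof. reflexivity. Qed.

Lemma sumR_ext n f g : (forall i, (i < n)%nat -> f i = g i) -> sumR n f = sumR n g.
Proof.
  induction n as [|n IH]; intros H. reflexivity.
  rewrite !sumR_S, IH, H; auto; intros; apply H; lia.
Qed.

Lemma sumR_plus n f g : sumR n (fun i => f i + g i) = sumR n f + sumR n g.
Proof. induction n as [|n IH]. simpl; unfold sumR; simpl; lra. rewrite !sumR_S, IH. lra. Qed.

Lemma sumR_scal n c f : sumR n (fun i => c * f i) = c * sumR n f.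
Proof. induction n as [|n IH]. unfold sumR; simpl; lra. rewrite !sumR_S, IH. lra. Qed.

Lemma sumR_opp n f : sumR n (fun i => - f i) = - sumR n f.
Proof. induction n as [|n IH]. unfold sumR; simpl; lra. rewrite !sumR_S, IH. lra. Qed.

Lemma sumR_zero n : sumR n (fun _ => 0) = 0.
Proof. induction n as [|n IH]. reflexivity. rewrite sumR_S, IH. lra. Qed.

Lemma sumR_const n c : sumR n (fun _ => c) = INR n * c.
Proof. induction n as [|n IH]. unfold sumR; simpl; lra. rewrite sumR_S, IH, S_INR. lra. Qed.

Lemma sumR_le n f g : (forall i, (i < n)%nat -> f i <= g i) -> sumR n f <= sumR n g.
Proof.
  induction n as [|n IH]; intros H. unfold sumR; simpl; lra.
  rewrite !sumR_S. assert (H1 := H n (Nat.lt_succ_diag_r n)).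
  assert (sumR n f <= sumR n g) by (apply IH; intros; apply H; lia). lra.
Qed.

Lemma sumR_nonneg n f : (forall i, (i < n)%nat -> 0 <= f i) -> 0 <= sumR n f.
Proof. intros H. rewrite <- (sumR_zero n). apply sumR_le. auto. Qed.

Lemma sumR_single_le n f j : (forall i, (i < n)%nat -> 0 <= f i) -> (j < n)%nat -> f j <= sumR n f.
Proof.
  induction n as [|n IH]; intros H hj. lia.
  rewrite sumR_S. destruct (Nat.eq_dec j n) as [->|ne].
  - assert (0 <= sumR n f) by (apply sumR_nonneg; intros; apply H; lia). lra.
  - assert (f j <= sumR n f) by (apply IH; [intros; apply H; lia| lia]).
    assert (0 <= f n) by (apply H; lia). lra.
Qed.

Lemma sumR_swap n m (f : nat -> nat -> R) :
  sumR n (fun i => sumR m (fun j => f i j)) = sumR m (fun j => sumR n (fun i => f i j)).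
Proof.
  induction n as [|n IH]. rewrite sumR_0. symmetry. rewrite <- (sumR_zero m). apply sumR_ext. reflexivity.
  rewrite sumR_S, IH, <- sumR_plus. apply sumR_ext. intros. rewrite sumR_S. reflexivity.
Qed.

Lemma sumR_delta_l n j f : (j < n)%nat -> sumR n (fun i => idm i j * f i) = f j.
Proof.
  induction n as [|n IH]; intros hj. lia.
  rewrite sumR_S. unfold idm at 2. destruct (Nat.eqb_spec n j) as [->|ne].
  - rewrite (sumR_ext _ _ (fun _ => 0)), sumR_zero. lra.
    intros i hi. unfold idm. destruct (Nat.eqb_spec i j). lia. lra.
  - rewrite IH by lia. lra.
Qed.

Lemma sumR_delta_r n j f : (j < n)%nat -> sumR n (fun i => f i * idm i j) = f j.
Proof. intros hj. rewrite <- (sumR_delta_l n j f hj). apply sumR_ext. intros; lra. Qed.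

Lemma idm_sym i j : idm i j = idm j i.
Proof. unfold idm. rewrite Nat.eqb_sym. reflexivity. Qed.

Definition dot n (x y : Vec) := sumR n (fun i => x i * y i).

Lemma mvec_mmul n A B v i : mvec n (mmul n A B) v i = mvec n A (mvec n B v) i.
Proof.
  unfold mvec, mmul.
  rewrite (sumR_ext n (fun l => sumR n (fun k => A i k * B k l) * v l)
                      (fun l => sumR n (fun k => A i k * B k l * v l))).
  2:{ intros l _. rewrite Rmult_comm, <- sumR_scal. apply sumR_ext. intros; lra. }
  rewrite sumR_swap. apply sumR_ext. intros k _. rewrite <- sumR_scal. apply sumR_ext. intros; lra.
Qed.

Lemma dot_trm n z A v : dot n z (mvec n A v) = dot n (mvec n (trm A) z) v.
Proof.
  unfold dot, mvec, trm.
  rewrite (sumR_ext n (fun i => z i * sumR n (fun l => A i l * v l))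
                      (fun i => sumR n (fun l => z i * A i l * v l))).
  2:{ intros. rewrite <- sumR_scal. apply sumR_ext. intros; lra. }
  rewrite sumR_swap. apply sumR_ext. intros l _. rewrite Rmult_comm, <- sumR_scal. apply sumR_ext. intros; lra.
Qed.

Lemma dot_comm n x y : dot n x y = dot n y x.
Proof. unfold dot. apply sumR_ext. intros; lra. Qed.

Lemma dot_ext n x x' y y' : (forall i, (i<n)%nat -> x i = x' i) -> (forall i, (i<n)%nat -> y i = y' i) ->
  dot n x y = dot n x' y'.
Proof. intros h1 h2. unfold dot. apply sumR_ext. intros. rewrite h1, h2; auto. Qed.

Lemma mvec_ext n A A' v v' : meq n n A A' -> (forall i, (i<n)%nat -> v i = v' i) ->
  forall i, (i<n)%nat -> mvec n A v i = mvec n A' v' i.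
Proof. intros h1 h2 i hi. unfold mvec. apply sumR_ext. intros. rewrite h1, h2; auto. Qed.

Lemma mvec_lin n A x y c i : mvec n A (fun k => x k + c * y k) i = mvec n A x i + c * mvec n A y i.
Proof. unfold mvec. rewrite <- sumR_scal, <- sumR_plus. apply sumR_ext. intros; ring. Qed.

Lemma dot_lin_l n x y z c : dot n (fun k => x k + c * y k) z = dot n x z + c * dot n y z.
Proof. unfold dot. rewrite <- sumR_scal, <- sumR_plus. apply sumR_ext. intros; ring. Qed.

Lemma dot_lin_r n x y z c : dot n z (fun k => x k + c * y k) = dot n z x + c * dot n z y.
Proof. unfold dot. rewrite <- sumR_scal, <- sumR_plus. apply sumR_ext. intros; ring. Qed.

Definition ev (j : nat) : Vec := fun i => idm i j.

Lemma mvec_ev n A j i : (j < n)%nat -> mvec n A (ev j) i = A i j.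
Proof. intros hj. unfold mvec, ev. apply sumR_delta_r. auto. Qed.

Lemma dot_ev_l n j y : (j < n)%nat -> dot n (ev j) y = y j.
Proof. intros hj. unfold dot, ev. apply sumR_delta_l; auto. Qed.
Lemma dot_ev_r n j y : (j < n)%nat -> dot n y (ev j) = y j.
Proof. intros hj. unfold dot, ev. apply sumR_delta_r; auto. Qed.

Lemma inv_col n A B j i : meq n n (mmul n A B) idm -> (i<n)%nat -> (j<n)%nat ->
  mvec n A (mvec n B (ev j)) i = ev j i.
Proof.
  intros h hi hj. rewrite <- mvec_mmul, mvec_ev by auto. apply h; auto.
Qed.

Lemma mvec_madd n A B x i : mvec n (madd A B) x i = mvec n A x i + mvec n B x i.
Proof. unfold mvec, madd. rewrite <- sumR_plus. apply sumR_ext. intros; ring. Qed.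
Lemma mvec_msub n A B x i : mvec n (msub A B) x i = mvec n A x i - mvec n B x i.
Proof. unfold mvec, msub.
  rewrite (sumR_ext n _ (fun l => A i l * x l + - (B i l * x l))) by (intros; ring).
  rewrite sumR_plus, sumR_opp. ring. Qed.

Lemma mvec_mmulF n A B v : mvec n (mmul n A B) v = mvec n A (mvec n B v).
Proof. apply functional_extensionality. intros. apply mvec_mmul. Qed.
Lemma mvec_idm n x i : (i < n)%nat -> mvec n idm x i = x i.
Proof. intros hi. unfold mvec. rewrite <- (sumR_delta_l n i x hi). apply sumR_ext. intros. rewrite idm_sym. auto. Qed.
Lemma mvec_scal_idm n c x i : (i < n)%nat -> mvec n (mscale c idm) x i = c * x i.
Proof. intros hi. unfold mvec, mscale. rewrite <- mvec_idm with (n:=n) by auto. unfold mvec.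
  rewrite <- sumR_scal. apply sumR_ext. intros; ring. Qed.

Lemma sym_trm n S x i : symmetric n S -> (i < n)%nat -> mvec n (trm S) x i = mvec n S x i.
Proof. intros hs hi. unfold mvec. apply sumR_ext. intros l hl. unfold trm. rewrite (hs i l); auto. Qed.

Lemma quad_dot n A x : quad n A x = dot n x (mvec n A x).
Proof. reflexivity. Qed.

Lemma quad_inv n S Sinv x : meq n n (mmul n S Sinv) idm ->
  quad n Sinv x = quad n S (mvec n Sinv x).
Proof.
  intros h. rewrite !quad_dot, dot_comm. apply dot_ext; auto.
  intros i hi. rewrite <- mvec_mmul. rewrite (mvec_ext n _ idm x x h); auto.
  rewrite mvec_idm; auto.
Qed.

Lemma sym_inv n S Sinv : symmetric n S -> meq n n (mmul n S Sinv) idm -> symmetric n Sinv.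
Proof.
  intros hs h i j hi hj. unfold trm.
  set (a := mvec n Sinv (ev i)). set (b := mvec n Sinv (ev j)).
  assert (Ha : forall k, (k < n)%nat -> mvec n S a k = ev i k).
  { intros k hk. unfold a. apply inv_col; auto. }
  assert (Hb : forall k, (k < n)%nat -> mvec n S b k = ev j k).
  { intros k hk. unfold b. apply inv_col; auto. }
  transitivity (b i). unfold b. rewrite mvec_ev; auto.
  transitivity (a j). 2:{ unfold a. rewrite mvec_ev; auto. }
  rewrite <- (dot_ev_l n i b hi), <- (dot_ev_r n j a hj).
  rewrite (dot_ext n (ev i) (mvec n S a) b b); auto. 2:{ intros; rewrite Ha; auto. }
  rewrite (dot_ext n a a (ev j) (mvec n S b)); auto. 2:{ intros; rewrite Hb; auto. }
  rewrite (dot_trm n a S b). apply dot_ext; auto. intros; symmetry; apply sym_trm; auto.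
Qed.

Lemma ric_ge n H C V W Sg s2 : psd n Sg -> V = mscale s2 idm -> 0 <= s2 ->
  riccati_solution n H C V W Sg -> forall z, quad n W z <= quad n Sg z.
Proof.
  intros [hsym hpsd] hV hs2 [M' [[hinv _] hric]] z.
  set (u := mvec n (trm H) z).
  set (w := mvec n C (mvec n Sg u)).
  set (t := mvec n M' w).
  set (s := mvec n (trm C) t).
  assert (E1 : quad n Sg z = dot n u (mvec n Sg u) - dot n w t + quad n W z).
  { rewrite !quad_dot.
    rewrite (dot_ext n z z (mvec n Sg z)
       (fun i => mvec n (mmul n (mmul n H Sg) (trm H)) z i
                 + (-1) * mvec n (mmul n (mmul n (mmul n (mmul n (mmul n H Sg) (trm C)) M') C) (mmul n Sg (trm H))) z i
                 + 1 * mvec n W z i)); auto.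
    2:{ intros i hi. rewrite (mvec_ext n _ _ z z hric); auto. rewrite mvec_madd, mvec_msub. ring. }
    rewrite dot_lin_r. rewrite (dot_lin_r n (fun i => mvec n (mmul n (mmul n H Sg) (trm H)) z i)).
    rewrite !mvec_mmulF. 
    rewrite !(dot_trm n z H). fold u.
    assert (A2 : dot n u (mvec n Sg (mvec n (trm C) (mvec n M' (mvec n C (mvec n Sg u))))) = dot n w t).
    { fold w t s. rewrite (dot_trm n u Sg s). 
      rewrite (dot_ext n (mvec n (trm Sg) u) (mvec n Sg u) s s); auto.
      2:{ intros; apply sym_trm; auto. }
      unfold s. rewrite dot_trm. reflexivity. }
    rewrite A2. ring. }
  assert (Hpt : forall i, (i < n)%nat -> mvec n C (mvec n Sg s) i + s2 * t i = w i).
  { intros i hi. unfold t.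
    rewrite <- (mvec_idm n w i hi).
    rewrite <- (mvec_ext n _ _ w w hinv); auto.
    rewrite mvec_mmul, mvec_madd, hV, mvec_scal_idm by auto.
    rewrite mvec_mmulF, mvec_mmulF. reflexivity. }
  assert (E2 : dot n t w = dot n s (mvec n Sg s) + s2 * dot n t t).
  { rewrite (dot_ext n t t w (fun i => mvec n C (mvec n Sg s) i + s2 * t i)); auto.
    2:{ intros; rewrite Hpt; auto. }
    rewrite dot_lin_r. rewrite (dot_trm n t C). reflexivity. }
  assert (E3 : dot n s (mvec n Sg u) = dot n w t).
  { unfold s. rewrite dot_comm, dot_trm. reflexivity. }
  assert (E4 : dot n u (mvec n Sg s) = dot n s (mvec n Sg u)).
  { rewrite dot_trm, dot_comm. apply dot_ext; auto. intros; apply sym_trm; auto. }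
  assert (E5 := hpsd (fun k => u k + (-1) * s k)).
  rewrite quad_dot in E5.
  assert (E6 : mvec n Sg (fun k => u k + (-1) * s k) = fun k => mvec n Sg u k + (-1) * mvec n Sg s k).
  { apply functional_extensionality; intros; apply mvec_lin. }
  rewrite E6, dot_lin_l, !dot_lin_r in E5.
  assert (E7 : 0 <= dot n t t).
  { unfold dot. apply sumR_nonneg. intros. apply Rle_0_sqr. }
  rewrite dot_comm in E2.
  assert (0 <= s2 * dot n t t) by (apply Rmult_le_pos; auto).
  rewrite E1. nra.
Qed.

Lemma diag_upper n a Sinv x j :
  (j < n)%nat -> (forall i, (i<n)%nat -> 0 <= a i) -> 0 < a j ->
  (forall z, 0 <= dot n z (mvec n Sinv z)) ->
  (forall i, (i<n)%nat -> a i * x i + mvec n Sinv x i = ev j i) ->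
  x j <= / a j.
Proof.
  intros hj ha haj hS hF.
  assert (E : dot n x (ev j) = dot n x (fun i => a i * x i) + 1 * dot n x (mvec n Sinv x)).
  { rewrite <- dot_lin_r. apply dot_ext; auto. intros; rewrite <- hF; auto; ring. }
  rewrite dot_ev_r in E by auto.
  assert (a j * (x j * x j) <= dot n x (fun i => a i * x i)).
  { unfold dot. replace (a j * (x j * x j)) with (x j * (a j * x j)) by ring. apply (sumR_single_le n (fun i => x i * (a i * x i)) j); auto.
    intros i hi. assert (0 <= a i) by auto. assert (0 <= x i * x i) by apply Rle_0_sqr. nra.
    }
  assert (0 <= dot n x (mvec n Sinv x)) by auto.
  destruct (Rle_dec (x j) 0). 
  - assert (0 < / a j) by (apply Rinv_0_lt_compat; auto). lra.
  - apply Rmult_le_reg_l with (a j); auto. rewrite Rinv_r by lra. nra.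
Qed.

Lemma diag_lower n a Sinv x j :
  (j < n)%nat -> (forall i, (i<n)%nat -> 0 <= a i) ->
  (forall z, 0 <= dot n z (mvec n Sinv z)) -> symmetric n Sinv ->
  0 < a j + Sinv j j ->
  (forall i, (i<n)%nat -> a i * x i + mvec n Sinv x i = ev j i) ->
  / (a j + Sinv j j) <= x j.
Proof.
  intros hj ha hS hsym hm hF.
  set (F := fun z i => a i * z i + mvec n Sinv z i).
  assert (q0 : forall z, 0 <= dot n z (F z)).
  { intro z. unfold F.
    rewrite (dot_ext n z z _ (fun k => a k * z k + 1 * mvec n Sinv z k)); auto. 2:{ intros; ring. }
    rewrite (dot_lin_r n (fun i => a i * z i) (mvec n Sinv z) z 1) .
    assert (0 <= dot n z (fun i => a i * z i)).
    { unfold dot. apply sumR_nonneg. intros i hi. assert (0 <= a i) by auto.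
      assert (0 <= z i * z i) by apply Rle_0_sqr. nra. }
    assert (0 <= dot n z (mvec n Sinv z)) by auto. lra. }
  assert (Flin : forall z1 z2 c i, F (fun k => z1 k + c * z2 k) i = F z1 i + c * F z2 i).
  { intros. unfold F. rewrite mvec_lin. ring. }
  assert (xj : x j = dot n x (F x)).
  { rewrite <- (dot_ev_r n j x hj). apply dot_ext; auto. intros i hi. unfold F. rewrite hF; auto. }
  assert (dxm : dot n x (F (ev j)) = 1).
  { unfold F.
    rewrite (dot_ext n x x _ (fun k => a k * ev j k + 1 * mvec n Sinv (ev j) k)); auto. 2:{ intros; ring. }
    rewrite (dot_lin_r n (fun i => a i * ev j i) (mvec n Sinv (ev j)) x 1).
    rewrite dot_trm.
    rewrite (dot_ext n (mvec n (trm Sinv) x) (mvec n Sinv x) (ev j) (ev j)); auto.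
    2:{ intros; apply sym_trm; auto. }
    rewrite dot_ev_r by auto.
    assert (dot n x (fun i => a i * ev j i) = a j * x j).
    { unfold dot, ev. rewrite <- (sumR_delta_l n j (fun i => a i * x i)) by auto.
      apply sumR_ext. intros; ring. }
    rewrite H. rewrite Rmult_1_l. rewrite (hF j hj). unfold ev, idm. rewrite Nat.eqb_refl. reflexivity. }
  assert (mj : F (ev j) j = a j + Sinv j j).
  { unfold F. rewrite mvec_ev by auto. unfold ev, idm. rewrite Nat.eqb_refl. ring. }
  assert (Q : forall t, 0 <= a j + Sinv j j - 2 * t + t * t * x j).
  { intro t. assert (h := q0 (fun k => ev j k + (- t) * x k)).
    rewrite (dot_ext n _ (fun k => ev j k + (- t) * x k) _ (fun k => F (ev j) k + (-t) * ev j k)) in h; auto.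
    2:{ intros i hi. rewrite Flin. unfold F at 2. rewrite hF; auto. }
    rewrite dot_lin_l, !dot_lin_r in h.
    rewrite dot_ev_l, dot_ev_l, dot_ev_r in h by auto.
    rewrite mj, dxm in h. unfold ev, idm in h. rewrite Nat.eqb_refl in h. nra. }
  assert (x0 : 0 <= x j).
  { rewrite xj. auto. }
  set (m := a j + Sinv j j) in *.
  destruct (Req_dec (x j) 0) as [e|ne].
  - specialize (Q (m / 2 + 1)). rewrite e in Q. lra.
  - specialize (Q (/ x j)). 
    assert (0 < x j) by lra.
    replace (m - 2 * / x j + / x j * / x j * x j) with (m - / x j) in Q by (field; lra).
    apply Rmult_le_reg_l with m; auto. rewrite Rinv_r by lra.
    apply Rmult_le_reg_r with (/ x j). apply Rinv_0_lt_compat; auto.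
    rewrite Rmult_assoc, Rinv_r by lra. lra.
Qed.

Lemma Rabs_sumR n f : Rabs (sumR n f) <= sumR n (fun i => Rabs (f i)).
Proof.
  induction n as [|n IH]. unfold sumR; simpl. rewrite Rabs_R0. lra.
  rewrite !sumR_S. eapply Rle_trans. apply Rabs_triang. lra.
Qed.

Lemma abs_bounds a b : Rabs a <= b -> - b <= a <= b.
Proof. intros h. split; [ generalize (Rle_abs (-a)); rewrite Rabs_Ropp; lra | generalize (Rle_abs a); lra ]. Qed.

Lemma sq_le_dot n x i : (i < n)%nat -> x i * x i <= dot n x x.
Proof. intros hi. unfold dot. apply (sumR_single_le n (fun k => x k * x k)); auto.
  intros; apply Rle_0_sqr. Qed.

Lemma dot_nonneg n x : 0 <= dot n x x.
Proof. unfold dot. apply sumR_nonneg. intros; apply Rle_0_sqr. Qed.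

Definition absum n (A : Mat) := sumR n (fun i => sumR n (fun j => Rabs (A i j))).

Lemma absum_nonneg n A : 0 <= absum n A.
Proof. unfold absum. apply sumR_nonneg. intros. apply sumR_nonneg. intros. apply Rabs_pos. Qed.

Lemma quad_bound n A x : Rabs (quad n A x) <= absum n A * dot n x x.
Proof.
  unfold quad, absum. unfold mvec.
  rewrite (sumR_ext n _ (fun i => sumR n (fun j => A i j * (x i * x j)))).
  2:{ intros. rewrite <- sumR_scal. apply sumR_ext. intros; ring. }
  eapply Rle_trans. apply Rabs_sumR.
  rewrite Rmult_comm, <- sumR_scal. apply sumR_le. intros i hi.
  eapply Rle_trans. apply Rabs_sumR.
  rewrite <- sumR_scal. apply sumR_le. intros j hj.
  rewrite Rabs_mult. rewrite (Rmult_comm (dot n x x)). apply Rmult_le_compat_l. apply Rabs_pos.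
  assert (h1 := sq_le_dot n x i hi). assert (h2 := sq_le_dot n x j hj).
  rewrite Rabs_mult.
  assert (0 <= (Rabs (x i) - Rabs (x j)) * (Rabs (x i) - Rabs (x j))) by apply Rle_0_sqr.
  assert (Rabs (x i) * Rabs (x i) = x i * x i) by (rewrite <- Rabs_mult; apply Rabs_right; apply Rle_ge, Rle_0_sqr).
  assert (Rabs (x j) * Rabs (x j) = x j * x j) by (rewrite <- Rabs_mult; apply Rabs_right; apply Rle_ge, Rle_0_sqr).
  nra.
Qed.

Lemma rayleigh_core n W lam :
  (0 < n)%nat -> symmetric n W -> is_min_eigenvalue n W lam ->
  (forall P : Mat,
     (exists Q : Mat, forall i j, (i<n)%nat -> (j<n)%nat -> sumR n (fun k => Q i k * P k j) = idm i j)
     \/ (exists v : Vec, nonzero_vec n v /\ forall j, (j<n)%nat -> sumR n (fun i => v i * P i j) = 0)) ->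
  forall x, lam * dot n x x <= quad n W x.
Proof.
  intros hn hsym [_ hmin] bridge.
  set (T := fun t => forall x, t * dot n x x <= quad n W x).
  assert (Tne : T (- absum n W)).
  { intros x. assert (h := quad_bound n W x). apply abs_bounds in h. lra. }
  assert (Tb : bound T).
  { exists (W 0%nat 0%nat). intros t ht. specialize (ht (ev 0)).
    rewrite quad_dot in ht. rewrite !dot_ev_l in ht by auto. rewrite mvec_ev in ht by auto. unfold ev, idm in ht. simpl in ht. lra. }
  destruct (completeness T Tb (ex_intro _ _ Tne)) as [m [mub mlub]].
  assert (Tm : T m).
  { intros x. destruct (Rle_lt_dec (m * dot n x x) (quad n W x)) as [ok|bad]; auto.
    exfalso. assert (d0 := dot_nonneg n x).
    destruct (Req_dec (dot n x x) 0) as [e|ne].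
    - specialize (Tne x). rewrite e in Tne, bad. lra.
    - assert (dp : 0 < dot n x x) by lra.
      set (t' := quad n W x / dot n x x).
      assert (t' < m).
      { unfold t'. apply Rmult_lt_reg_r with (dot n x x); auto. field_simplify; lra. }
      assert (~ is_upper_bound T t').
      { intro hu. specialize (mlub t' hu). lra. }
      apply H0. intros t ht. specialize (ht x).
      unfold t'. apply Rmult_le_reg_r with (dot n x x); auto. field_simplify; lra. }
  set (P := fun i j => W i j - m * idm i j).
  assert (mP : forall x i, (i < n)%nat -> mvec n P x i = mvec n W x i - m * x i).
  { intros x i hi. unfold P. rewrite <- (mvec_scal_idm n m x i hi). rewrite <- mvec_msub. reflexivity. }
  assert (qP : forall x, quad n P x = quad n W x - m * dot n x x).
  { intros x. rewrite !quad_dot. rewrite (dot_ext n x x _ (fun i => mvec n W x i + (-m) * x i)); auto.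
    rewrite dot_lin_r. ring. intros; rewrite mP; auto. ring. }
  assert (Psym : symmetric n P).
  { intros i j hi hj. unfold P, trm. rewrite (hsym i j) by auto. unfold trm. rewrite idm_sym. reflexivity. }
  assert (Ppsd : forall x, 0 <= quad n P x).
  { intros x. rewrite qP. specialize (Tm x). lra. }
  destruct (bridge P) as [[Q hQ] | [v [vnz hv]]].
  - exfalso.
    set (cP := absum n P + 1).
    set (cQ := absum n (mmul n (trm Q) Q) + 1).
    assert (cPp : 0 < cP) by (unfold cP; generalize (absum_nonneg n P); lra).
    assert (cQp : 0 < cQ) by (unfold cQ; generalize (absum_nonneg n (mmul n (trm Q) Q)); lra).
    set (eps := / (2 * cQ * cP)).
    assert (epsp : 0 < eps) by (unfold eps; apply Rinv_0_lt_compat; nra).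
    assert (notT : ~ T (m + eps)).
    { intro h. specialize (mub _ h). lra. }
    unfold T in notT. apply not_all_ex_not in notT. destruct notT as [x hx].
    apply Rnot_le_lt in hx.
    assert (hqx : quad n P x < eps * dot n x x) by (rewrite qP; lra).
    set (y := mvec n P x).
    assert (Dy : dot n y y <= cP * quad n P x).
    { set (s := / cP).
      assert (h := Ppsd (fun k => x k + (- s) * y k)).
      rewrite quad_dot in h.
      rewrite (dot_ext n (fun k => x k + - s * y k) (fun k => x k + - s * y k) (mvec n P (fun k => x k + - s * y k)) (fun k => mvec n P x k + (-s) * mvec n P y k)) in h; auto.
      2:{ intros; apply mvec_lin. }
      rewrite dot_lin_l, !dot_lin_r in h.
      assert (e1 : dot n x (mvec n P y) = dot n y y).
      { rewrite dot_trm. apply dot_ext; auto. intros; apply sym_trm; auto. }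
      assert (e2 : dot n y (mvec n P x) = dot n y y) by reflexivity.
      rewrite e1, e2 in h. rewrite <- !quad_dot in h.
      assert (hb := quad_bound n P y). apply abs_bounds in hb.
      assert (0 <= dot n y y) by apply dot_nonneg.
      assert (quad n P y <= cP * dot n y y).
      { apply Rle_trans with (absum n P * dot n y y). destruct hb as [_ hb2]; exact hb2. unfold cP. nra. }
      assert (s * cP = 1) by (unfold s; field; lra).
      assert (0 < s) by (unfold s; apply Rinv_0_lt_compat; auto).
      assert (s * s * quad n P y <= s * dot n y y).
      { apply Rle_trans with (s * s * (cP * dot n y y)).
        apply Rmult_le_compat_l; auto. nra. right. replace (s * s * (cP * dot n y y)) with ((s * cP) * (s * dot n y y)) by ring.
        match goal with hh : s * cP = 1 |- _ => rewrite hh end. ring. }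
      assert (0 <= quad n P x - s * dot n y y) by nra.
      apply Rmult_le_reg_l with s; auto. rewrite <- Rmult_assoc. rewrite (Rmult_comm s cP). nra. }
    assert (Dx : dot n x x <= cQ * dot n y y).
    { assert (ex : forall i, (i < n)%nat -> x i = mvec n Q y i).
      { intros i hi. unfold y. rewrite <- mvec_mmul. rewrite <- (mvec_idm n x i hi).
        apply mvec_ext; auto. intros a b ha hb. unfold mmul. symmetry; apply hQ; auto. }
      rewrite (dot_ext n x (mvec n Q y) x (mvec n Q y)); auto.
      rewrite dot_trm, dot_comm, <- mvec_mmulF, <- quad_dot.
      assert (hb := quad_bound n (mmul n (trm Q) Q) y). apply abs_bounds in hb.
      assert (0 <= dot n y y) by apply dot_nonneg.
      unfold cQ. nra. }
    assert (0 <= quad n P x) by auto.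
    assert (0 <= dot n y y) by apply dot_nonneg.
    assert (dp : 0 < dot n x x) by nra.
    assert (dot n x x <= cQ * cP * quad n P x).
    { apply Rle_trans with (cQ * dot n y y); auto. rewrite Rmult_assoc. apply Rmult_le_compat_l; lra. }
    assert (cQ * cP * quad n P x < cQ * cP * (eps * dot n x x)).
    { apply Rmult_lt_compat_l; nra. }
    assert (cQ * cP * (eps * dot n x x) = dot n x x / 2) by (unfold eps; field; lra).
    lra.
  - assert (hm : lam <= m).
    { apply hmin. exists v. split; auto. intros i hi.
      assert (e := hv i hi). 
      assert (mvec n (trm P) v i = 0) by (rewrite <- e; unfold mvec, trm; apply sumR_ext; intros; ring).
      rewrite sym_trm in H by auto. rewrite mP in H by auto. lra. }
    intros x. specialize (Tm x). assert (0 <= dot n x x) by apply dot_nonneg. nra.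
Qed.

Lemma exp_mono x y : x <= y -> exp x <= exp y.
Proof. intros h. destruct (Req_dec x y) as [->|ne]. lra. apply Rlt_le, exp_increasing. lra. Qed.

Lemma exp_pow_INR x k : exp x ^ k = exp (INR k * x).
Proof.
  induction k as [|k IH]. simpl. rewrite Rmult_0_l, exp_0. reflexivity.
  rewrite <- tech_pow_Rmult, IH, S_INR, <- exp_plus. f_equal. ring.
Qed.

Lemma exp_lb a : 0 <= a <= 256 -> (1 - a/256)^256 <= exp (- a).
Proof.
  intros h. replace (- a) with (INR 256 * (- a / 256)) by (simpl; field).
  rewrite <- exp_pow_INR. apply pow_incr. split. lra.
  generalize (exp_ineq1_le (- a / 256)). lra.
Qed.

Lemma exp_ub a : 0 <= a -> exp (- a) <= / (1 + a/256)^256.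
Proof.
  intros h. rewrite exp_Ropp. apply Rinv_le_contravar. apply pow_lt. lra.
  replace a with (INR 256 * (a / 256)) at 2 by (simpl; field).
  rewrite <- exp_pow_INR. apply pow_incr. split. lra.
  generalize (exp_ineq1_le (a / 256)). lra.
Qed.

Lemma gauss_ex_derive x : ex_derive gauss_pdf x.
Proof. unfold gauss_pdf. auto_derive. auto. Qed.

Lemma gauss_cont x : continuous gauss_pdf x.
Proof. apply (@ex_derive_continuous R_AbsRing R_NormedModule), gauss_ex_derive. Qed.

Lemma gauss_exRInt a b : ex_RInt gauss_pdf a b.
Proof. apply (@ex_RInt_continuous R_CompleteNormedModule). intros; apply gauss_cont. Qed.

Lemma sqrt2pi_pos : 0 < sqrt (2 * PI).
Proof. apply sqrt_lt_R0. generalize PI_RGT_0; lra. Qed.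

Lemma gauss_pos x : 0 < gauss_pdf x.
Proof. unfold gauss_pdf. apply Rmult_lt_0_compat. apply Rinv_0_lt_compat, sqrt2pi_pos. apply exp_pos. Qed.

Lemma gauss_dec x y : 0 <= x <= y -> gauss_pdf y <= gauss_pdf x.
Proof.
  intros h. unfold gauss_pdf. apply Rmult_le_compat_l.
  apply Rlt_le, Rinv_0_lt_compat, sqrt2pi_pos.
  apply exp_mono. simpl. nra.
Qed.

Lemma chasles a b c : RInt gauss_pdf a c = RInt gauss_pdf a b + RInt gauss_pdf b c.
Proof. symmetry. apply (@RInt_Chasles R_CompleteNormedModule gauss_pdf a b c); apply gauss_exRInt. Qed.

Lemma int_nonneg a b : a <= b -> 0 <= RInt gauss_pdf a b.
Proof. intros h. apply RInt_ge_0; auto. apply gauss_exRInt. intros; apply Rlt_le, gauss_pos. Qed.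

Lemma int_lb a b : 0 <= a <= b -> (b - a) * gauss_pdf b <= RInt gauss_pdf a b.
Proof.
  intros h. replace ((b - a) * gauss_pdf b) with (RInt (fun _ => gauss_pdf b) a b).
  2:{ rewrite (@RInt_const R_CompleteNormedModule). reflexivity. }
  apply RInt_le. lra. apply (@ex_RInt_const R_CompleteNormedModule). apply gauss_exRInt.
  intros x hx. apply gauss_dec. lra.
Qed.

Lemma int_tail c b : 0 < c <= b -> RInt gauss_pdf c b <= gauss_pdf c / c.
Proof.
  intros h.
  assert (E : RInt (fun x => x * gauss_pdf x / c) c b = gauss_pdf c / c - gauss_pdf b / c).
  { apply (@is_RInt_unique R_CompleteNormedModule).
    replace (gauss_pdf c / c - gauss_pdf b / c) with (minus (- gauss_pdf b / c) (- gauss_pdf c / c)).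
    2:{ unfold minus, plus, opp; simpl. field. lra. }
    apply (@is_RInt_derive R_CompleteNormedModule (fun x => - gauss_pdf x / c)).
    - intros x hx. unfold gauss_pdf. auto_derive. auto. replace (- (x * (x * 1)) * / 2) with (- x ^ 2 / 2) by (simpl; field). field. split; [|lra].
      apply Rgt_not_eq, sqrt2pi_pos.
    - intros x hx. apply (@ex_derive_continuous R_AbsRing R_NormedModule (fun x => x * gauss_pdf x / c)).
      unfold gauss_pdf. auto_derive. auto. }
  apply Rle_trans with (RInt (fun x => x * gauss_pdf x / c) c b).
  - apply RInt_le. lra. apply gauss_exRInt.
    apply (@ex_RInt_continuous R_CompleteNormedModule). intros. apply (@ex_derive_continuous R_AbsRing R_NormedModule (fun x => x * gauss_pdf x / c)).
    unfold gauss_pdf. auto_derive. auto.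
    intros x hx. assert (0 < gauss_pdf x) by apply gauss_pos.
    apply Rmult_le_reg_r with c. lra. field_simplify. nra. lra.
  - rewrite E. assert (0 < gauss_pdf b) by apply gauss_pos.
    assert (0 < gauss_pdf b / c) by (apply Rdiv_lt_0_compat; lra). lra.
Qed.

Lemma riemann_pr a b : a <= b -> Riemann_integrable gauss_pdf a b.
Proof.
  intros h. apply continuity_implies_RiemannInt; auto.
  intros x _. apply continuity_pt_filterlim. apply gauss_cont.
Qed.

Lemma sqrt2pi_ub : sqrt (2 * PI) <= 283/100.
Proof.
  rewrite <- (sqrt_square (283/100)) by lra. apply sqrt_le_1_alt. generalize PI_4. lra.
Qed.
Lemma sqrt2pi_lb : 2 <= sqrt (2 * PI).
Proof.
  apply Rle_trans with (sqrt (2 * 2)). rewrite sqrt_square; lra.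
  apply sqrt_le_1_alt. generalize PI2_1. lra.
Qed.

Lemma phi_lb y : 0 <= y ^ 2 / 2 <= 256 -> (1 - (y^2/2)/256)^256 * (100/283) <= gauss_pdf y.
Proof.
  intros h. unfold gauss_pdf. rewrite (Rmult_comm (/ sqrt (2 * PI))).
  replace (- y ^ 2 / 2) with (- (y ^ 2 / 2)) by field.
  apply Rmult_le_compat. apply pow_le. lra. lra. apply exp_lb; auto.
  replace (100/283) with (/ (283/100)) by field. apply Rinv_le_contravar. apply sqrt2pi_pos. apply sqrt2pi_ub.
Qed.

Lemma phi_ub y : 0 <= y ^ 2 / 2 -> gauss_pdf y <= / (1 + (y^2/2)/256)^256 * (1/2).
Proof.
  intros h. unfold gauss_pdf. rewrite (Rmult_comm (/ sqrt (2 * PI))).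
  replace (- y ^ 2 / 2) with (- (y ^ 2 / 2)) by field.
  apply Rmult_le_compat. apply Rlt_le, exp_pos. apply Rlt_le, Rinv_0_lt_compat, sqrt2pi_pos. apply exp_ub; auto.
  replace (1/2) with (/ 2) by field. apply Rinv_le_contravar. lra. apply sqrt2pi_lb.
Qed.

Lemma int13 : 105/1000 <= RInt gauss_pdf 1 3.
Proof.
  rewrite (chasles 1 (5/4) 3), (chasles (5/4) (3/2) 3), (chasles (3/2) (7/4) 3), (chasles (7/4) 2 3),
    (chasles 2 (9/4) 3), (chasles (9/4) (5/2) 3), (chasles (5/2) (11/4) 3).
  assert (h1 := int_lb 1 (5/4) ltac:(lra)).
  assert (h2 := int_lb (5/4) (3/2) ltac:(lra)).
  assert (h3 := int_lb (3/2) (7/4) ltac:(lra)).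
  assert (h4 := int_lb (7/4) 2 ltac:(lra)).
  assert (h5 := int_lb 2 (9/4) ltac:(lra)).
  assert (h6 := int_lb (9/4) (5/2) ltac:(lra)).
  assert (h7 := int_lb (5/2) (11/4) ltac:(lra)).
  assert (h8 := int_lb (11/4) 3 ltac:(lra)).
  assert (p1 := phi_lb (5/4) ltac:(lra)).
  assert (p2 := phi_lb (3/2) ltac:(lra)).
  assert (p3 := phi_lb (7/4) ltac:(lra)).
  assert (p4 := phi_lb 2 ltac:(lra)).
  assert (p5 := phi_lb (9/4) ltac:(lra)).
  assert (p6 := phi_lb (5/2) ltac:(lra)).
  assert (p7 := phi_lb (11/4) ltac:(lra)).
  assert (p8 := phi_lb 3 ltac:(lra)).
  lra.
Qed.

Lemma tail45 b : 9/2 <= b -> RInt gauss_pdf (9/2) b <= 6/1000000.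
Proof.
  intros hb. assert (h := int_tail (9/2) b ltac:(lra)).
  assert (p := phi_ub (9/2) ltac:(lra)). lra.
Qed.

Lemma Kd_ge1 Kd delta : Qtail Kd delta -> delta <= 1e-1 -> 1 <= Kd.
Proof.
  intros hQ hd. change (1e-1) with (1/10) in hd.
  destruct (Rle_lt_dec 1 Kd) as [ok|bad]; auto. exfalso.
  destruct (hQ (1/1000) ltac:(lra)) as [B hB].
  set (b := Rmax B 3).
  assert (hb1 : B <= b) by apply Rmax_l. assert (hb3 : 3 <= b) by apply Rmax_r.
  assert (pr := riemann_pr Kd b ltac:(lra)).
  specialize (hB b pr hb1). rewrite <- RInt_Reals in hB.
  rewrite (chasles Kd 1 b), (chasles 1 3 b) in hB.
  assert (i1 := int_nonneg Kd 1 ltac:(lra)). assert (i2 := int_nonneg 3 b hb3).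
  assert (i3 := int13).
  generalize (Rle_abs (RInt gauss_pdf Kd 1 + (RInt gauss_pdf 1 3 + RInt gauss_pdf 3 b) - delta)). lra.
Qed.

Lemma Kd_le Kd delta : Qtail Kd delta -> 1e-5 <= delta -> Kd <= 9/2.
Proof.
  intros hQ hd. change (1e-5) with (1/100000) in hd.
  destruct (Rle_lt_dec Kd (9/2)) as [ok|bad]; auto. exfalso.
  destruct (hQ (1/1000000) ltac:(lra)) as [B hB].
  set (b := Rmax B (Kd + 1)).
  assert (hb1 : B <= b) by apply Rmax_l. assert (hb3 : Kd + 1 <= b) by apply Rmax_r.
  assert (pr := riemann_pr Kd b ltac:(lra)).
  specialize (hB b pr hb1). rewrite <- RInt_Reals in hB.
  assert (e := chasles (9/2) Kd b).
  assert (i1 := int_nonneg (9/2) Kd ltac:(lra)).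
  assert (i3 := tail45 b ltac:(lra)).
  generalize (Rle_abs (- (RInt gauss_pdf Kd b - delta))). rewrite Rabs_Ropp. lra.
Qed.

Ltac nz := first [apply pow_nonzero | idtac]; first [apply Rgt_not_eq; lra | apply Rlt_not_eq; lra].

Lemma sqrt_sq_eq x : 0 <= x -> sqrt x * sqrt x = x.
Proof. apply sqrt_sqrt. Qed.

Lemma scalar_upper (nr Delta eps Kd sigma Bu Cl2 eta4 : R) :
  0 < nr -> 0 < Delta -> 0 < eps -> 1 <= Kd <= 9/2 ->
  sigma = Delta / (2 * eps) * (Kd + sqrt (Kd ^ 2 + 2 * eps)) ->
  0 < Bu -> 0 < Cl2 ->
  eta4 = sqrt (Bu * Cl2 / (nr * Delta ^ 2)) ->
  / 8 * ((1 + sqrt (36 * eta4 + 1)) / eta4) ^ 2 <= eps ->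
  nr * (sigma ^ 2 / Cl2) <= Bu.
Proof.
  intros hn hD he hK hs hBu hC he4 hcond.
  set (X := Bu * Cl2 / (nr * Delta ^ 2)) in *.
  assert (Xp : 0 < X) by (unfold X; apply Rdiv_lt_0_compat; [nra | apply Rmult_lt_0_compat; [lra | apply pow_lt; lra]]).
  assert (e4p : 0 < eta4) by (rewrite he4; apply sqrt_lt_R0; auto).
  assert (e4sq : eta4 * eta4 = X) by (rewrite he4; apply sqrt_sqrt; lra).
  set (r := sqrt (36 * eta4 + 1)) in *.
  assert (rsq : r * r = 36 * eta4 + 1) by (apply sqrt_sqrt; lra).
  assert (r1 : 1 <= r).
  { unfold r. apply Rle_trans with (sqrt 1). rewrite sqrt_1; lra. apply sqrt_le_1_alt. lra. }
  assert (c1 : (1 + r) * (1 + r) <= 8 * eta4 * eta4 * eps).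
  { replace (/ 8 * ((1 + r) / eta4) ^ 2) with ((1 + r) * (1 + r) / (8 * eta4 * eta4)) in hcond by (field; lra).
    apply Rmult_le_reg_r with (/ (8 * eta4 * eta4)). apply Rinv_0_lt_compat; nra.
    replace (8 * eta4 * eta4 * eps * / (8 * eta4 * eta4)) with eps by (field; lra). lra. }
  assert (c2 : 1 + 2 * Kd * eta4 <= 2 * eta4 * eta4 * eps) by nra.
  set (s := sqrt (Kd ^ 2 + 2 * eps)) in *.
  assert (s0 : 0 <= s) by apply sqrt_pos.
  assert (ssq : s * s = Kd ^ 2 + 2 * eps) by (apply sqrt_sqrt; nra).
  set (t := 2 * eps * eta4 - Kd).
  assert (tp : 0 < t).
  { unfold t. apply Rmult_lt_reg_r with eta4; auto. nra. }
  assert (st : s * s <= t * t).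
  { unfold t. rewrite ssq. simpl. 
    assert (1 <= 2 * eps * eta4 * eta4 - 2 * eta4 * Kd) by nra.
    assert (2 * eps <= 2 * eps * (2 * eps * eta4 * eta4 - 2 * eta4 * Kd)) by nra. nra. }
  assert (st2 : s <= t) by nra.
  assert (sg0 : 0 <= sigma).
  { rewrite hs. apply Rmult_le_pos. apply Rlt_le, Rdiv_lt_0_compat; lra. lra. }
  assert (sgle : sigma <= Delta * eta4).
  { rewrite hs. unfold t in st2. apply Rmult_le_reg_l with (2 * eps). lra.
    replace (2 * eps * (Delta / (2 * eps) * (Kd + s))) with (Delta * (Kd + s)) by (field; lra). nra. }
  assert (sigma ^ 2 <= X * Delta ^ 2) by (simpl; nra).
  unfold X in H. replace (nr * (sigma ^ 2 / Cl2)) with (sigma ^ 2 * (nr / Cl2)) by (field; lra).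
  apply Rle_trans with (Bu * Cl2 / (nr * Delta ^ 2) * Delta ^ 2 * (nr / Cl2)).
  apply Rmult_le_compat_r; auto. apply Rlt_le, Rdiv_lt_0_compat; lra.
  right. field. repeat split; nz.
Qed.

Lemma scalar_lower (nr Delta eps Kd sigma Bl Cu2 lam eta2 : R) :
  0 < Delta -> 0 < eps -> 1 <= Kd ->
  sigma = Delta / (2 * eps) * (Kd + sqrt (Kd ^ 2 + 2 * eps)) ->
  0 < lam -> 0 < Bl -> Bl < nr * lam -> 0 < Cu2 ->
  eta2 = sqrt (Bl * Cu2 / (Delta ^ 2 * (nr - Bl / lam))) ->
  eps <= / eta2 ->
  Bl <= nr * / (Cu2 / sigma ^ 2 + / lam).
Proof.
  intros hD he hK hs hl hBl hBn hC he2 hcond.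
  assert (hm : 0 < nr - Bl / lam).
  { apply Rmult_lt_reg_r with lam; auto. unfold Rdiv. field_simplify; lra. }
  set (X := Bl * Cu2 / (Delta ^ 2 * (nr - Bl / lam))) in *.
  assert (Xp : 0 < X) by (unfold X; apply Rdiv_lt_0_compat; [nra | apply Rmult_lt_0_compat; [apply pow_lt; lra | lra]]).
  assert (e2p : 0 < eta2) by (rewrite he2; apply sqrt_lt_R0; auto).
  assert (e2sq : eta2 * eta2 = X) by (rewrite he2; apply sqrt_sqrt; lra).
  assert (c1 : eps * eta2 <= 1).
  { apply Rmult_le_reg_r with (/ eta2). apply Rinv_0_lt_compat; auto.
    rewrite Rmult_assoc, Rinv_r by lra. lra. }
  set (s := sqrt (Kd ^ 2 + 2 * eps)) in *.
  assert (s0 : 0 <= s) by apply sqrt_pos.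
  assert (ssq : s * s = Kd ^ 2 + 2 * eps) by (apply sqrt_sqrt; nra).
  assert (sK : Kd <= s) by (simpl in ssq; nra).
  assert (sgge : Delta * eta2 <= sigma).
  { rewrite hs. apply Rmult_le_reg_l with (2 * eps). lra.
    replace (2 * eps * (Delta / (2 * eps) * (Kd + s))) with (Delta * (Kd + s)) by (field; lra).
    assert (2 * eps * eta2 <= Kd + s) by lra. nra. }
  assert (sg0 : 0 < sigma) by nra.
  assert (hh : Delta * eta2 * (Delta * eta2) <= sigma * sigma) by (apply Rmult_le_compat; nra).
  assert (X * Delta ^ 2 <= sigma ^ 2).
  { rewrite <- e2sq. simpl. nra. }
  unfold X in H.
  assert (E : Bl * Cu2 / (Delta ^ 2 * (nr - Bl / lam)) * Delta ^ 2 = Bl * Cu2 / (nr - Bl / lam)).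
  { field. repeat split; nz. }
  rewrite E in H.
  assert (h2 : Bl * Cu2 <= sigma ^ 2 * (nr - Bl / lam)).
  { apply Rmult_le_reg_r with (/ (nr - Bl / lam)). apply Rinv_0_lt_compat; auto.
    replace (sigma ^ 2 * (nr - Bl / lam) * / (nr - Bl / lam)) with (sigma ^ 2) by (field; lra). lra. }
  assert (sp : 0 < sigma ^ 2) by (apply pow_lt; lra).
  assert (dp : 0 < Cu2 / sigma ^ 2 + / lam).
  { assert (0 < Cu2 / sigma ^ 2) by (apply Rdiv_lt_0_compat; lra). assert (0 < / lam) by (apply Rinv_0_lt_compat; lra). lra. }
  apply Rmult_le_reg_r with (Cu2 / sigma ^ 2 + / lam); auto.
  rewrite Rmult_assoc, Rinv_l by lra.
  replace (Bl * (Cu2 / sigma ^ 2 + / lam)) with ((Bl * Cu2 + sigma ^ 2 * (Bl / lam)) / sigma ^ 2) by (field; lra).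
  apply Rmult_le_reg_r with (sigma ^ 2); auto.
  replace ((Bl * Cu2 + sigma ^ 2 * (Bl / lam)) / sigma ^ 2 * sigma ^ 2) with (Bl * Cu2 + sigma ^ 2 * (Bl / lam)) by (field; lra).
  nra.
Qed.

Definition bridge_stmt := forall (n : nat) (P : Mat),
  (exists Q : Mat, forall i j, (i<n)%nat -> (j<n)%nat -> sumR n (fun k => Q i k * P k j) = idm i j)
  \/ (exists v : Vec, nonzero_vec n v /\ forall j, (j<n)%nat -> sumR n (fun i => v i * P i j) = 0).

From HB Require structures.
From mathcomp Require all_boot all_order all_algebra.
From mathcomp Require Rstruct.
Module MCBridge.
Import HB.structures.
Import mathcomp.boot.all_boot mathcomp.order.all_order mathcomp.algebra.all_algebra.
Import mathcomp.reals_stdlib.Rstruct.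
Import GRing.Theory.

Lemma sumR_big n (f : nat -> R) : sumR n f = (\sum_(i < n) f i)%R.
Proof.
  elim: n => [|n IH]; first by rewrite big_ord0.
  by rewrite sumR_S big_ord_recr /= IH.
Qed.

Definition ext n (F : 'I_n -> R) (k : nat) : R :=
  match (insub k : option 'I_n) with Some i => F i | None => 0%R end.

Lemma bridge : bridge_stmt.
Proof.
  move=> n P.
  set A : 'M[R]_n := (\matrix_(i < n, j < n) P i j)%R.
  have extE : forall F (i : 'I_n), ext n F i = F i.
    by move=> F i; rewrite /ext valK.
  case: (boolP ((\det A == 0)%R)) => hdet.
  - right. move: hdet => /det0P [v vnz vA].
    exists (ext n (fun i => v ord0 i)). split.
    + case: (pickP (fun i => v ord0 i != 0%R)) => [i hi|h0].
      * exists (nat_of_ord i); split; first by apply/ssrnat.ltP; exact: ltn_ord.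
        by rewrite extE; apply/eqP.
      * exfalso; move/negP: vnz; apply; apply/eqP/rowP => i.
        move: (h0 i) => /= /negbFE /eqP ->. by rewrite mxE.
    + move=> j hj0. have hj : (j < n)%N by apply/ssrnat.ltP; exact hj0. rewrite sumR_big.
      have e0 := congr1 (fun M : 'rV_n => M ord0 (Ordinal hj)) vA.
      rewrite /= !mxE in e0.
      apply: (etrans _ e0). apply: eq_bigr => i _.
      by rewrite extE /A mxE.
  - left. have hu : A \in unitmx by rewrite unitmxE unitfE.
    exists (fun i j => ext n (fun ii => ext n (fun jj => invmx A ii jj) j) i).
    move=> i j hi0 hj0. have hi : (i < n)%N by apply/ssrnat.ltP; exact hi0. have hj : (j < n)%N by apply/ssrnat.ltP; exact hj0. rewrite sumR_big.
    have := congr1 (fun M : 'M_n => M (Ordinal hi) (Ordinal hj)) (mulVmx hu).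
    rewrite /= !mxE => e.
    have -> : idm i j = ((Ordinal hi == Ordinal hj)%:R)%R.
      rewrite /idm /=. case: (Nat.eqb_spec i j) => eij; case: eqP => eo //.
      - by exfalso; apply: eo; apply: val_inj.
      - by exfalso; apply: eij; move: (congr1 val eo).
    rewrite -e. apply: eq_bigr => k _.
    by rewrite (extE _ (Ordinal hi)) extE !mxE.
Qed.

End MCBridge.


Lemma rayleigh n W lam : (0 < n)%nat -> symmetric n W -> is_min_eigenvalue n W lam ->
  forall x, lam * dot n x x <= quad n W x.
Proof. intros hn hs hm. apply rayleigh_core; auto. intro P. apply MCBridge.bridge. Qed.

Lemma diag_mvec n C z k : diagonal n C -> (k < n)%nat -> mvec n C z k = C k k * z k.
Proof.
  intros hd hk. unfold mvec.
  rewrite (sumR_ext n _ (fun l => idm l k * (C k l * z l))).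
  - apply sumR_delta_l; auto.
  - intros l hl. unfold idm. destruct (Nat.eqb_spec l k) as [->|ne]. ring.
    rewrite hd by auto. ring.
Qed.

Lemma diag_trm n C : diagonal n C -> diagonal n (trm C).
Proof. intros hd i j hi hj ne. unfold trm. apply hd; auto. Qed.

Lemma vinv_lemma n s2 Vinv : (0 < n)%nat -> is_inv n (mscale s2 idm) Vinv ->
  s2 <> 0 /\ forall y i, (i < n)%nat -> mvec n Vinv y i = / s2 * y i.
Proof.
  intros hn [h1 _].
  assert (E : forall i j, (i < n)%nat -> (j < n)%nat -> s2 * Vinv i j = idm i j).
  { intros i j hi hj. rewrite <- (h1 i j hi hj). unfold mmul, mscale.
    rewrite <- (sumR_delta_l n i (fun l => Vinv l j)) by auto. rewrite <- sumR_scal.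
    apply sumR_ext. intros l hl. rewrite idm_sym. ring. }
  assert (s2 <> 0).
  { intro h0. specialize (E 0%nat 0%nat hn hn). rewrite h0 in E. unfold idm in E. simpl in E. lra. }
  split; auto. intros y i hi. unfold mvec.
  rewrite <- (sumR_delta_l n i y hi), <- sumR_scal. apply sumR_ext. intros l hl.
  rewrite idm_sym, <- (E i l hi hl). field. auto.
Qed.

Lemma A_form n C Vinv c z i : diagonal n C -> (forall y k, (k < n)%nat -> mvec n Vinv y k = c * y k) ->
  (i < n)%nat -> mvec n (mmul n (mmul n (trm C) Vinv) C) z i = C i i * C i i * c * z i.
Proof.
  intros hd hv hi. rewrite !mvec_mmulF. rewrite (diag_mvec n (trm C)) by (auto; apply diag_trm; auto).
  rewrite hv by auto. rewrite diag_mvec by auto. unfold trm. ring.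
Qed.

Theorem theorem6
  (n m : nat) (H W D C : Mat)
  (hW : pd n W)
  (hWD : meq n n W (mmul m D (trm D)))
  (hCdiag : diagonal n C)
  (hCnz : forall i, (i < n)%nat -> C i i <> 0)
  (hobs : observable n n H C)
  (hctrl : controllable n m H D)
  (Delta delta eps Kd : R)
  (hDelta : 0 < Delta)
  (hdelta : 1e-5 <= delta <= 1e-1)
  (heps : 0 < eps)
  (hKd : Qtail Kd delta)
  (sigma : R)
  (hsigma : sigma = Delta / (2 * eps) * (Kd + sqrt (Kd ^ 2 + 2 * eps)))
  (V Vinv Sigma Sigmainv Sigmabar : Mat)
  (hV : V = mscale (sigma ^ 2) idm)
  (hVinv : is_inv n V Vinv)
  (hSigma : psd n Sigma)
  (hRic : riccati_solution n H C V W Sigma)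
  (hSinv : is_inv n Sigma Sigmainv)
  (hSbar : is_inv n (madd (mmul n (mmul n (trm C) Vinv) C) Sigmainv) Sigmabar)
  (lam : R) (hlam : is_min_eigenvalue n W lam)
  (Cl Cu : R)
  (hCl : exists l, (l < n)%nat /\ Cl = C l l /\ forall i, (i < n)%nat -> Cl ^ 2 <= C i i ^ 2)
  (hCu : exists u, (u < n)%nat /\ Cu = C u u /\ forall i, (i < n)%nat -> C i i ^ 2 <= Cu ^ 2)
  (Bl Bu : R)
  (hBl : 0 < Bl < INR n * lam)
  (hBu : 0 < Bu)
  (eta2 eta4 : R)
  (heta2 : eta2 = sqrt (Bl * Cu ^ 2 / (Delta ^ 2 * (INR n - Bl / lam))))
  (heta4 : eta4 = sqrt (Bu * Cl ^ 2 / (INR n * Delta ^ 2))) :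
  (/ 8 * ((1 + sqrt (36 * eta4 + 1)) / eta4) ^ 2 <= eps -> trace n Sigmabar <= Bu) /\
  (eps <= / eta2 -> Bl <= trace n Sigmabar).
Proof.
  assert (hn : (0 < n)%nat).
  { destruct n. simpl in hBl. lra. lia. }
  assert (hnr : 0 < INR n) by (apply lt_0_INR; auto).
  assert (hlam0 : 0 < lam) by nra.
  assert (hK1 : 1 <= Kd) by (apply (Kd_ge1 Kd delta); tauto).
  assert (hK2 : Kd <= 9/2) by (apply (Kd_le Kd delta); tauto).
  rewrite hV in hVinv.
  destruct (vinv_lemma n (sigma ^ 2) Vinv hn hVinv) as [s2nz hvv].
  assert (s2p : 0 < sigma ^ 2).
  { assert (0 <= sigma ^ 2) by apply pow2_ge_0. destruct (Req_dec (sigma^2) 0); [contradiction|lra]. }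
  assert (sgnz : sigma <> 0) by (intro e; apply s2nz; rewrite e; ring).
  assert (hsymS := proj1 hSigma).
  assert (hRay := rayleigh n W lam hn (proj1 hW) hlam).
  assert (hric := ric_ge n H C V W Sigma (sigma ^ 2) hSigma hV (pow2_ge_0 sigma) hRic).
  destruct hSinv as [hSS hSS2].
  assert (SinvSym := sym_inv n Sigma Sigmainv hsymS hSS).
  assert (SinvPsd : forall z, 0 <= dot n z (mvec n Sigmainv z)).
  { intro z. rewrite <- quad_dot, (quad_inv n Sigma Sigmainv z hSS). apply (proj2 hSigma). }
  set (a := fun i => C i i * C i i * / sigma ^ 2).
  assert (apos : forall i, (i < n)%nat -> 0 < a i).
  { intros i hi. unfold a. apply Rmult_lt_0_compat. 
    assert (C i i <> 0) by auto. assert (0 < C i i * C i i).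
    { destruct (Rlt_dec 0 (C i i)). nra. assert (C i i < 0) by lra. nra. }
    lra. apply Rinv_0_lt_compat; auto. }
  assert (hF : forall j, (j < n)%nat -> forall i, (i < n)%nat ->
     a i * mvec n Sigmabar (ev j) i + mvec n Sigmainv (mvec n Sigmabar (ev j)) i = ev j i).
  { intros j hj i hi. rewrite <- (inv_col n _ Sigmabar j i (proj1 hSbar) hi hj).
    rewrite mvec_madd. rewrite (A_form n C Vinv (/ sigma ^ 2)) by auto. unfold a. reflexivity. }
  assert (hSbjj : forall j, (j < n)%nat -> Sigmabar j j = mvec n Sigmabar (ev j) j).
  { intros j hj. rewrite mvec_ev; auto. }
  assert (hUp : forall j, (j < n)%nat -> Sigmabar j j <= / a j).
  { intros j hj. rewrite hSbjj by auto. apply (diag_upper n a Sigmainv); auto.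
    intros; apply Rlt_le; auto. }
  assert (hSi : forall j, (j < n)%nat -> 0 <= Sigmainv j j <= / lam).
  { intros j hj. set (y := mvec n Sigmainv (ev j)).
    assert (yj : y j = Sigmainv j j) by (unfold y; rewrite mvec_ev; auto).
    assert (dy : dot n y (mvec n Sigma y) = y j).
    { rewrite <- (dot_ev_r n j y hj). apply dot_ext; auto. intros i hi. unfold y. apply inv_col; auto. }
    assert (q1 := hric y). assert (q2 := hRay y). assert (q3 := sq_le_dot n y j hj).
    rewrite (quad_dot n Sigma y), dy in q1.
    assert (h1 : lam * (y j * y j) <= y j) by nra.
    assert (h2 : 0 <= y j) by nra.
    rewrite <- yj. split; auto.
    destruct (Req_dec (y j) 0) as [e|ne]. rewrite e. apply Rlt_le, Rinv_0_lt_compat; auto.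
    apply Rmult_le_reg_l with lam; auto. rewrite Rinv_r by lra.
    apply Rmult_le_reg_r with (y j). lra. nra. }
  assert (hLo : forall j, (j < n)%nat -> / (a j + Sigmainv j j) <= Sigmabar j j).
  { intros j hj. rewrite hSbjj by auto. apply (diag_lower n a Sigmainv); auto.
    intros; apply Rlt_le; auto. assert (0 < a j) by auto. assert (h := hSi j hj). lra. }
  destruct hCl as [l [hl [eCl hCl']]].
  destruct hCu as [u [hu [eCu hCu']]].
  assert (Cl2p : 0 < Cl ^ 2).
  { rewrite eCl. assert (C l l <> 0) by auto. simpl. rewrite Rmult_1_r.
    destruct (Rlt_dec 0 (C l l)). nra. assert (C l l < 0) by lra. nra. }
  assert (Cu2p : 0 < Cu ^ 2).
  { assert (h := hCu' l hl). rewrite <- eCl in h. lra. }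
  split.
  - intros hcond.
    apply Rle_trans with (INR n * (sigma ^ 2 / Cl ^ 2)).
    + unfold trace. rewrite <- sumR_const. apply sumR_le. intros i hi.
      apply Rle_trans with (/ a i). auto. unfold a.
      assert (h := hCl' i hi). simpl in h. rewrite Rmult_1_r in h.
      assert (0 < C i i * C i i) by (simpl in Cl2p; lra).
      replace (/ (C i i * C i i * / sigma ^ 2)) with (sigma ^ 2 / (C i i * C i i)) by (field; split; [exact sgnz | apply hCnz; exact hi]).
      unfold Rdiv. apply Rmult_le_compat_l. lra. apply Rinv_le_contravar. auto. simpl. lra.
    + apply (scalar_upper (INR n) Delta eps Kd sigma Bu (Cl ^ 2) eta4); auto.
  - intros hcond.
    apply Rle_trans with (INR n * / (Cu ^ 2 / sigma ^ 2 + / lam)).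
    + apply (scalar_lower (INR n) Delta eps Kd sigma Bl (Cu ^ 2) lam eta2); auto; lra.
    + unfold trace. rewrite <- sumR_const. apply sumR_le. intros i hi.
      apply Rle_trans with (/ (a i + Sigmainv i i)); auto.
      assert (0 < a i) by auto. assert (h := hSi i hi).
      apply Rinv_le_contravar. lra.
      assert (a i <= Cu ^ 2 / sigma ^ 2).
      { unfold a. assert (h2 := hCu' i hi). simpl in h2 |- *. rewrite Rmult_1_r in h2 |- *.
        unfold Rdiv. apply Rmult_le_compat_r. apply Rlt_le, Rinv_0_lt_compat. simpl in s2p; lra. lra. }
      lra.
Qed.
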